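(* Let $u:\mathbb{R}_{\ge 0}\to[0,1]$ be non-increasing with $u(0)=1$ and $\lim_{t\to\infty}u(t)=0$. Let there be $n$ algorithms with runtime CDFs $F_1,\dots,F_n$, expected utilities $U_i=\int_0^\infty u(t)\,dF_i(t)$, let $i^{opt}\in\arg\max_i U_i$ and $\Delta_i=U_{i^{opt}}-U_i$. For captimes $\kappa_1,\dots,\kappa_n>0$ let $LB_i=\int_0^{\kappa_i}u(t)\,dF_i(t)$, $UB_i=LB_i+u(\kappa_i)(1-F_i(\kappa_i))$, and $i^*\in\arg\max_i LB_i$. Let $\epsilon>0$. If $$u(\kappa_i)\big(1-F_i(\kappa_i)\big)\le\Delta_i+\frac{\epsilon}{2}\quad\text{for all algorithms } i,$$ then the skeptic is convinced that both $i^{opt}$ and $i^*$ are $\epsilon$-optimal, i.e., $LB_{i^{opt}}\ge UB_i-\epsilon$ for all $i\ne i^{opt}$ and $LB_{i^*}\ge UB_i-\epsilon$ for all $i\neq i^*$.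
   Context: An algorithm $j$ is $\epsilon$-optimal if $U_j\ge\max_i U_i-\epsilon$. In the prover–skeptic setting, the skeptic sees each CDF $F_i$ only on $[0,\kappa_i]$ and is ''convinced that $j$ is $\epsilon$-optimal'' exactly when $LB_j\ge UB_i-\epsilon$ for all $i\neq j$; this condition implies that $j$ is $\epsilon$-optimal. *)

(* Defs.v *)
From mathcomp Require Import all_boot all_order all_algebra.
From mathcomp Require Import all_classical all_reals all_analysis.
Set Implicit Arguments. Unset Strict Implicit. Unset Printing Implicit Defensive.
Import Order.TTheory GRing.Theory Num.Theory.
Local Open Scope classical_set_scope.
Local Open Scope ring_scope.

(* A runtime distribution is a Borel probability measure P on R (concentrated
   on [0,+oo[); its CDF is F(t) = P(]-oo,t]). Integrals "∫ u dF" are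
   Lebesgue–Stieltjes integrals, i.e. integrals against P. *)

Definition rt_cdf (R : realType) (P : probability R R) (t : R) : R :=
  fine (P [set` `]-oo, t]]).

Definition exp_util (R : realType) (P : probability R R) (u : R -> R) : \bar R :=
  (\int[P]_(t in `[0%R, +oo[) (u t)%:E)%E.

Definition LB (R : realType) (P : probability R R) (u : R -> R) (k : R) : \bar R :=
  (\int[P]_(t in `[0%R, k]) (u t)%:E)%E.

Definition UB (R : realType) (P : probability R R) (u : R -> R) (k : R) : \bar R :=
  (LB P u k + (u k * (1 - rt_cdf P k))%:E)%E.

(* Main.v *)
Require Import Defs.
From mathcomp Require Import all_boot all_order all_algebra.
From mathcomp Require Import all_classical all_reals all_analysis.
From mathcomp Require Import measurable_realfun ring lra.
Import Order.TTheory GRing.Theory Num.Theory.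
Local Open Scope classical_set_scope.
Local Open Scope ring_scope.

Lemma key (R : realType) (u : R -> R)
  (u_range : forall t : R, 0 <= t -> 0 <= u t <= 1)
  (u_noninc : forall s t : R, 0 <= s -> s <= t -> u t <= u s)
  (P : probability R R) (k : R) (k0 : 0 < k) :
  exists L Uv, LB P u k = L%:E /\ exp_util P u = Uv%:E /\ L <= Uv /\
     Uv <= L + u k * (1 - rt_cdf P k).
Proof.
have mu : measurable_fun (`[0%R, +oo[%classic : set R) u.
  apply: (@eq_measurable_fun _ _ R R _ (fun t : R => u (Num.max t 0)) u).
    move=> x; rewrite inE /= in_itv /= andbT => x0.
    by rewrite max_l.
  apply: nonincreasing_measurable => // s t st.
  apply: u_noninc; first by rewrite le_max lexx orbT.
  by rewrite ge_max !le_max st lexx !orbT.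
have mEu : measurable_fun (`[0%R, +oo[%classic : set R) (fun t => (u t)%:E).
  by apply/measurable_EFinP.
have k00 : 0 <= k by exact: ltW.
have eU : (`[0%R, +oo[%classic : set R) = (`[0%R, k]%classic : set R) `|` (`]k, +oo[%classic : set R).
  by rewrite -itv_bndbnd_setU // bnd_simp.
have sub1 : (`[0%R, k]%classic : set R) `<=` (`[0%R, +oo[%classic : set R).
  by rewrite eU; exact: subsetUl.
have sub2 : (`]k, +oo[%classic : set R) `<=` (`[0%R, +oo[%classic : set R).
  by rewrite eU; exact: subsetUr.
have upos : forall t, (`[0%R, +oo[%classic : set R) t -> (0 <= (u t)%:E)%E.
  move=> t /=; rewrite in_itv /= andbT => t0.
  by rewrite lee_fin; case/andP: (u_range t t0).
have dis : [disjoint (`[0%R, k]%classic : set R) & (`]k, +oo[%classic : set R)].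
  apply/disj_setPS => x [] /=; rewrite !in_itv /= andbT => /andP[_ xk] kx.
  by move: (lt_le_trans kx xk); rewrite ltxx.
have split := ge0_integral_setU P (measurable_itv `[0%R, k]) (measurable_itv `]k, +oo[) (ltac:(rewrite -eU; exact: mEu)) (ltac:(rewrite -eU; exact: upos)) dis.
rewrite -eU in split.
rewrite /exp_util /LB /UB split.
set A := (\int[P]_(x in _) _)%E.
set B := (\int[P]_(x in _) _)%E.
have ule1 : forall t, (`[0%R, +oo[%classic : set R) t -> ((u t)%:E <= 1)%E.
  move=> t /=; rewrite in_itv /= andbT => t0.
  by rewrite lee_fin; case/andP: (u_range t t0).
have A0 : (0 <= A)%E by apply: integral_ge0 => t /sub1; exact: upos.
have B0 : (0 <= B)%E by apply: integral_ge0 => t /sub2; exact: upos.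
have A1 : (A <= 1)%E.
  apply: (@le_trans _ _ (\int[P]_(x in `[0%R, k]) (cst 1%E) x)%E).
    apply: ge0_le_integral => //.
    - by move=> t /sub1; exact: upos.
    - exact: measurable_funS mEu.
    - by move=> t /sub1; exact: ule1.
  by rewrite integral_cst // mul1e probability_le1.
have B1 : (B <= (u k * (1 - rt_cdf P k))%:E)%E.
  apply: (@le_trans _ _ (\int[P]_(x in `]k, +oo[) (cst (u k)%:E) x)%E).
    apply: ge0_le_integral => //.
    - by move=> t /sub2; exact: upos.
    - exact: measurable_funS mEu.
    - move=> t /=; rewrite in_itv /= andbT => kt; rewrite lee_fin.
      by apply: u_noninc => //; exact: ltW.
  rewrite integral_cst //.
  set m := (X in (_ * X)%E).
  suff -> : m = (1 - rt_cdf P k)%:E by rewrite EFinM.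
  have h := @probability_setC _ _ _ P (`]-oo, k]%classic : set R) (measurable_itv _).
  rewrite setCitvl in h.
  transitivity (1 - P (`]-oo, k]%classic : set R))%E; first exact: h.
  rewrite EFinB /rt_cdf fineK //.
  exact: fin_num_measure.
have Afin : A \is a fin_num.
  by rewrite ge0_fin_numE // (le_lt_trans A1) // ltry.
have Bfin : B \is a fin_num.
  by rewrite ge0_fin_numE // (le_lt_trans B1) // ltry.
exists (fine A), (fine A + fine B); split; first by rewrite fineK.
split; first by rewrite EFinD !fineK.
have fB0 : 0 <= fine B by rewrite fine_ge0.
have fB1 : fine B <= u k * (1 - rt_cdf P k).
  by rewrite -lee_fin fineK.
split; first by rewrite lerDl.
by rewrite lerD2l.
Qed.

Theorem lemma6 (R : realType) (u : R -> R)
  (u_range : forall t : R, 0 <= t -> 0 <= u t <= 1)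
  (u_noninc : forall s t : R, 0 <= s -> s <= t -> u t <= u s)
  (u0 : u 0 = 1)
  (u_lim : u x @[x --> +oo%R] --> 0%R)
  (n : nat) (P : 'I_n -> probability R R)
  (P_nonneg : forall i, P i [set` `]-oo, 0[] = 0%E)
  (i_opt : 'I_n)
  (i_opt_max : forall i, (exp_util (P i) u <= exp_util (P i_opt) u)%E)
  (kappa : 'I_n -> R) (kappa_pos : forall i, 0 < kappa i)
  (i_star : 'I_n)
  (i_star_max : forall i, (LB (P i) u (kappa i) <= LB (P i_star) u (kappa i_star))%E)
  (eps : R) (eps_pos : 0 < eps)
  (Hcap : forall i, ((u (kappa i) * (1 - rt_cdf (P i) (kappa i)))%:E
           <= (exp_util (P i_opt) u - exp_util (P i) u) + (eps / 2)%:E)%E) :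
  (forall i, i != i_opt ->
     (UB (P i) u (kappa i) - eps%:E <= LB (P i_opt) u (kappa i_opt))%E) /\
  (forall i, i != i_star ->
     (UB (P i) u (kappa i) - eps%:E <= LB (P i_star) u (kappa i_star))%E).
Proof.
have main : forall i, (UB (P i) u (kappa i) - eps%:E <= LB (P i_opt) u (kappa i_opt))%E.
  move=> i.
  case: (@key R u u_range u_noninc (P i) _ (kappa_pos i)) => [Li [Ui [hL [hU [h1 h2]]]]].
  case: (@key R u u_range u_noninc (P i_opt) _ (kappa_pos i_opt)) => [Lo [Uo [hLo [hUo [h1o h2o]]]]].
  have c1 := Hcap i; have c2 := Hcap i_opt.
  rewrite hU hUo -EFinB -EFinD lee_fin in c1.
  rewrite hUo -EFinB -EFinD lee_fin in c2.
  rewrite /UB hL hLo -EFinD.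
  rewrite lee_fin.
  move: c1 c2 h1 h2 h1o h2o.
  move: (u (kappa i) * _) (u (kappa i_opt) * _) => Ti To.
  move=> c1 c2 h1 h2 h1o h2o.
  rewrite subrr add0r in c2.
  apply: (le_trans (y := Ui + (Uo - Ui + eps / 2) - eps)).
    by rewrite lerD2r lerD.
  have E : Ui + (Uo - Ui + eps / 2) - eps = Uo - eps / 2 + (eps / 2 + eps / 2 - eps) by ring.
  rewrite E -splitr subrr addr0 lerBlDr.
  by apply: (le_trans h2o); rewrite lerD2l.
split.
  move=> i _; exact: main.
move=> i _; exact: (le_trans (main i) (i_star_max i_opt)).
Qed.
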